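(* Consider a SOCO problem with decision space $F=[x_L,x_H]$ and a sequence of discrete systems, indexed by $i$, whose state spacings $\delta_i$ tend to $0$ and each of which has $[x_1,x_m]=F$. Let $OPT_D^i$ be the optimal cost in the $i$-th discrete system and $OPT_C$ the optimal cost in the continuous system, both under the norm $N$. Then $\lim_{i\to\infty}|OPT_D^i-OPT_C|=0$.
   Context: $F=[x_L,x_H]\subseteq\mathbb{R}^+$; $\|\cdot\|$ a norm on $\mathbb{R}$; $\theta\ge1$, $N(\cdot)=\theta\|\cdot\|$; cost functions $c^1,\dots,c^T:F\to\mathbb{R}^+$ convex (finite on $F$) with uniformly bounded subgradients; horizon $T$ fixed. A discrete system is a set of states $M=\{x_1<\dots<x_m\}\subseteq F$ with equal spacing $\delta=x_{k+1}-x_k$, $x_1=x_L$, $x_m=x_H$. The optimal cost over a state set $S$ ($S=M$ or $S=F$) under norm $N$ is $\min_{(x^1,\dots,x^T)\in S^T}\sum_{t=1}^Tc^t(x^t)+N(x^t-x^{t-1})$ with $x^0=0$. *)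

(* Defs.v *)
From Stdlib Require Import Reals Lra.
From Coquelicot Require Import Coquelicot.
Open Scope R_scope.

Definition is_norm (nrm : R -> R) : Prop :=
  (forall x, 0 <= nrm x) /\
  (forall x, nrm x = 0 -> x = 0) /\
  (forall a x, nrm (a * x) = Rabs a * nrm x) /\
  (forall x y, nrm (x + y) <= nrm x + nrm y).

Definition inF (xL xH x : R) : Prop := xL <= x <= xH.

Definition convex_on (xL xH : R) (f : R -> R) : Prop :=
  forall x y l, inF xL xH x -> inF xL xH y -> 0 <= l <= 1 ->
    f (l * x + (1 - l) * y) <= l * f x + (1 - l) * f y.

Definition subgradient (xL xH : R) (f : R -> R) (x g : R) : Prop :=
  forall y, inF xL xH y -> f x + g * (y - x) <= f y.

Definition unif_bounded_subgrad (xL xH : R) (c : nat -> R -> R) (T : nat) : Prop :=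
  exists G : R, forall t x, (1 <= t <= T)%nat -> inF xL xH x ->
    exists g, Rabs g <= G /\ subgradient xL xH (c t) x g.

Fixpoint traj_cost (c : nat -> R -> R) (N : R -> R) (x : nat -> R) (T : nat) : R :=
  match T with
  | O => 0
  | S T' => traj_cost c N x T' + c (S T') (x (S T')) + N (x (S T') - x T')
  end.

Definition admissible (S : R -> Prop) (T : nat) (x : nat -> R) : Prop :=
  x O = 0 /\ forall t, (1 <= t <= T)%nat -> S (x t).

Definition is_opt_cost (c : nat -> R -> R) (N : R -> R) (T : nat)
    (S : R -> Prop) (v : R) : Prop :=
  (exists x, admissible S T x /\ traj_cost c N x T = v) /\
  (forall x, admissible S T x -> v <= traj_cost c N x T).

Definition disc_states (xL delta : R) (m : nat) (x : R) : Prop :=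
  exists k : nat, (k < m)%nat /\ x = xL + INR k * delta.

(* (delta, m) describes a discrete system on F: delta > 0, m >= 1,
   x_1 = xL and x_m = xL + (m-1) delta = xH. *)
Definition valid_disc_system (xL xH delta : R) (m : nat) : Prop :=
  0 < delta /\ (1 <= m)%nat /\ xL + INR (m - 1) * delta = xH.

(* Main.v *)
Require Import Defs.
From Stdlib Require Import Reals.
From Coquelicot Require Import Coquelicot.
From Stdlib Require Import Lra Lia IndefiniteDescription.
Open Scope R_scope.

Lemma grid_exists (xL d : R) (n : nat) : 0 < d ->
  forall x, xL <= x <= xL + INR n * d ->
  exists k, (k <= n)%nat /\ Rabs (xL + INR k * d - x) <= d.
Proof.
  intros Hd. induction n as [|n IH]; intros x Hx.
  - exists O. split; [lia|]. simpl in *. rewrite Rabs_le_between. lra.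
  - destruct (Rle_dec x (xL + INR n * d)) as [H|H].
    + destruct (IH x ltac:(lra)) as [k [Hk1 Hk2]]. exists k. split; [lia|exact Hk2].
    + exists (S n). split; [lia|]. rewrite S_INR in *. rewrite Rabs_le_between. nra.
Qed.

Lemma disc_inF xL xH d m y : valid_disc_system xL xH d m ->
  disc_states xL d m y -> inF xL xH y.
Proof.
  intros [Hd [Hm Heq]] [k [Hk ->]]. unfold inF.
  assert (0 <= INR k) by apply pos_INR.
  assert (INR k <= INR (m - 1)) by (apply le_INR; lia).
  split; nra.
Qed.

Lemma round_fun xL xH d m : valid_disc_system xL xH d m ->
  exists f : R -> R, forall x, inF xL xH x ->
    disc_states xL d m (f x) /\ Rabs (f x - x) <= d.
Proof.
  intros Hv. apply (functional_choice (fun x y => inF xL xH x -> disc_states xL d m y /\ Rabs (y - x) <= d)).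
  intros x. destruct (Rle_dec xL x) as [H1|H1].
  - destruct (Rle_dec x xH) as [H2|H2].
    + destruct Hv as [Hd [Hm Heq]].
      destruct (grid_exists xL d (m-1) Hd x ltac:(lra)) as [k [Hk Hk2]].
      exists (xL + INR k * d). intros _. split; [|exact Hk2].
      exists k. split; [lia|reflexivity].
    + exists 0. intros [_ H]. lra.
  - exists 0. intros [H _]. lra.
Qed.

Lemma nrm_bound nrm : is_norm nrm -> forall a, nrm a = Rabs a * nrm 1.
Proof. intros [_ [_ [H _]]] a. rewrite <- H. f_equal. ring. Qed.

Theorem lemma12
  (xL xH : R) (nrm : R -> R) (theta : R) (c : nat -> R -> R) (T : nat)
  (delta : nat -> R) (m : nat -> nat) (optD : nat -> R) (optC : R) :
  0 <= xL -> xL <= xH ->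
  is_norm nrm -> 1 <= theta ->
  (forall t, (1 <= t <= T)%nat -> convex_on xL xH (c t)) ->
  (forall t x, (1 <= t <= T)%nat -> inF xL xH x -> 0 <= c t x) ->
  unif_bounded_subgrad xL xH c T ->
  (forall i, valid_disc_system xL xH (delta i) (m i)) ->
  is_lim_seq delta 0 ->
  (forall i, is_opt_cost c (fun z => theta * nrm z) T
               (disc_states xL (delta i) (m i)) (optD i)) ->
  is_opt_cost c (fun z => theta * nrm z) T (inF xL xH) optC ->
  is_lim_seq (fun i => Rabs (optD i - optC)) 0.
Proof.
  intros HxL HxLH Hn Hth _ _ [G HG] Hv Hlim HD [[xs [[Hx0 HxF] Hxc]] HC].
  assert (Hn1 : 0 <= nrm 1) by (destruct Hn as [H _]; apply H).
  set (K := G + 2 * theta * nrm 1).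
  assert (Hbound : forall i, 0 <= optD i - optC <= INR T * K * delta i).
  { intros i. destruct (HD i) as [[y [Hy Hyc]] HDmin].
    destruct (Hv i) as [Hd _].
    split.
    - assert (optC <= traj_cost c (fun z => theta * nrm z) y T).
      { apply HC. destruct Hy as [Hy0 HyS]. split; [exact Hy0|].
        intros t Ht. apply (disc_inF xL xH (delta i) (m i)); auto. }
      lra.
    - destruct (round_fun _ _ _ _ (Hv i)) as [f Hf].
      set (z := fun t => match t with O => 0 | S _ => f (xs t) end).
      assert (Hz : admissible (disc_states xL (delta i) (m i)) T z).
      { split; [reflexivity|]. intros t Ht. destruct t as [|t']; [lia|].
        apply (Hf (xs (S t'))). apply HxF. exact Ht. }
      assert (Hzd : forall t, (t <= T)%nat -> Rabs (z t - xs t) <= delta i).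
      { intros t Ht. destruct t as [|t'].
        - simpl. rewrite Hx0. rewrite Rminus_0_r, Rabs_R0. lra.
        - apply (Hf (xs (S t'))). apply HxF. lia. }
      assert (Hind : forall n, (n <= T)%nat ->
        traj_cost c (fun z => theta * nrm z) z n <=
        traj_cost c (fun z => theta * nrm z) xs n + INR n * K * delta i).
      { induction n as [|n IH]; intros Hn'.
        - simpl. lra.
        - simpl traj_cost. rewrite S_INR.
          specialize (IH ltac:(lia)).
          assert (HzF : inF xL xH (z (S n))).
          { apply (disc_inF xL xH (delta i) (m i)); auto. apply Hz. lia. }
          destruct (HG (S n) (z (S n)) ltac:(lia) HzF) as [g [Hg Hsub]].
          specialize (Hsub (xs (S n)) (HxF (S n) ltac:(lia))).
          assert (H1 : Rabs (z (S n) - xs (S n)) <= delta i) by (apply Hzd; lia).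
          assert (H2 : Rabs (z n - xs n) <= delta i) by (apply Hzd; lia).
          assert (Hc : c (S n) (z (S n)) <= c (S n) (xs (S n)) + G * delta i).
          { assert (- (g * (xs (S n) - z (S n))) <= Rabs g * Rabs (z (S n) - xs (S n))).
            { rewrite <- Rabs_mult. replace (- (g * (xs (S n) - z (S n)))) with (g * (z (S n) - xs (S n))) by ring.
              apply Rle_abs. }
            assert (Rabs g * Rabs (z (S n) - xs (S n)) <= G * delta i).
            { apply Rmult_le_compat; auto using Rabs_pos. }
            lra. }
          assert (Hnr : nrm (z (S n) - z n) <= nrm (xs (S n) - xs n) + 2 * nrm 1 * delta i).
          { pose proof Hn as Hncp. destruct Hncp as [_ [_ [_ Htri]]].
            replace (z (S n) - z n) with ((xs (S n) - xs n) + ((z (S n) - xs (S n)) + (- (z n - xs n)))) by ring.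
            eapply Rle_trans; [apply Htri|].
            eapply Rle_trans; [apply Rplus_le_compat_l; apply Htri|].
            rewrite (nrm_bound nrm Hn (z (S n) - xs (S n))), (nrm_bound nrm Hn (- (z n - xs n))), Rabs_Ropp.
            assert (Rabs (z (S n) - xs (S n)) * nrm 1 <= delta i * nrm 1) by (apply Rmult_le_compat_r; auto).
            assert (Rabs (z n - xs n) * nrm 1 <= delta i * nrm 1) by (apply Rmult_le_compat_r; auto).
            lra. }
          assert (theta * nrm (z (S n) - z n) <= theta * (nrm (xs (S n) - xs n) + 2 * nrm 1 * delta i)).
          { apply Rmult_le_compat_l; lra. }
          change (f (xs (S n))) with (z (S n)). assert (Hexp : (INR n + 1) * K * delta i = INR n * K * delta i + G * delta i + theta * (2 * nrm 1 * delta i)) by (unfold K; ring). rewrite Hexp. lra. }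
      specialize (Hind T (Nat.le_refl T)).
      specialize (HDmin z Hz). lra. }
  apply is_lim_seq_le_le with (u := fun _ => 0) (w := fun i => INR T * K * delta i).
  - intros i. specialize (Hbound i). rewrite Rabs_pos_eq by lra. lra.
  - apply is_lim_seq_const.
  - replace (Finite 0) with (Rbar_mult (INR T * K) 0) by (simpl; f_equal; ring).
    apply is_lim_seq_scal_l. exact Hlim.
Qed.
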